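(* Let $\mathbf{C}=\mathbf{C}_1\,\dot\cup\,\mathbf{C}_2$ (disjoint union), and let $\mathbf{B}\in\dot{\mathbb{P}}(\mathbb{L}(\mathbf{C}_1))$ with $|\mathbf{B}|=|\mathbf{C}_1|$. Then $\mathbf{B}$ is irreducible for $\mathcal{D}(\mathbf{C},\Omega)$ if and only if there exist $\omega^*\in\Omega$ and values $\mathbf{c}_2^*$ for $\mathbf{C}_2$ such that (i) $D_{\mathbf{B}=\mathbf{1},\mathbf{C}_2=\mathbf{c}_2^*}(\omega^* )=1$, and (ii) for every $L\in\mathbf{B}$, $D_{\mathbf{B}\setminus\{L\}=\mathbf{1},L=0,\mathbf{C}_2=\mathbf{c}_2^*}(\omega^* )=0$.
   Context: An event is a binary random variable on a population $\Omega$ of individuals $\omega$; $\overline{X}=1-X$. For a finite set $\mathbf{C}$ of events (causes), $\mathbb{L}(\mathbf{C})=\mathbf{C}\cup\{\overline{X}:X\in\mathbf{C}\}$, and $\dot{\mathbb{P}}(\mathbb{L}(\mathbf{C}))$ is the set of subsets of $\mathbb{L}(\mathbf{C})$ not containing both $X$ and $\overline{X}$ for any $X$. $(L)_{\mathbf{c}}$ is the value of literal $L$ under assignment $\mathbf{c}$, and $\bigwedge(\mathbf{B})=\min_{L\in\mathbf{B}}L$. The potential outcomes $\mathcal{D}(\mathbf{C},\Omega)$ are values $D_{\mathbf{c}}(\omega)\in\{0,1\}$ for every $\omega\in\Omega$ and every assignment $\mathbf{c}$ to $\mathbf{C}$. If $\mathbf{B}\in\dot{\mathbb{P}}(\mathbb{L}(\mathbf{C}_1))$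 has $|\mathbf{B}|=|\mathbf{C}_1|$ (exactly one literal per variable of $\mathbf{C}_1$), an assignment of values to the literals of $\mathbf{B}$ determines an assignment to $\mathbf{C}_1$; thus e.g. $D_{\mathbf{B}=\mathbf{1},\mathbf{C}_2=\mathbf{c}_2}(\omega)$ denotes the potential outcome when all literals in $\mathbf{B}$ are set to 1 and $\mathbf{C}_2$ to $\mathbf{c}_2$, and $D_{\mathbf{B}\setminus\{L\}=\mathbf{1},L=0,\mathbf{C}_2=\mathbf{c}_2}(\omega)$ the one where $L$ is set to 0 and the other literals of $\mathbf{B}$ to 1. A sufficient cause representation $(\mathbf{A},\mathfrak{B})$ for $\mathcal{D}(\mathbf{C},\Omega)$ is a tuple $\mathbf{A}=\langle A_1,\dots,A_p\rangle$ of binary random variables on $\Omega$ unaffected by interventions on $\mathbf{C}$ and a tuple $\mathfrak{B}=\langle\mathbf{B}_1,\dots,\mathbf{B}_p\rangle$, $\mathbf{B}_i\in\dot{\mathbb{P}}(\mathbb{L}(\mathbf{C}))$, such that for all $\omega,\mathbf{c}$: $D_{\mathbf{c}}(\omega)=1$ iff some $j$ has $A_j(\omega)=1$ and $(\bigwedge(\mathbf{B}_j))_{\mathbf{c}}=1$. A set $\mathbf{B}\in\dot{\mathbb{P}}(\mathbb{L}(\mathbf{C}))$ is irreducible for $\mathcal{D}(\mathbf{C},\Omega)$ if in every sufficient cause representation $(\mathbf{A},\mathfrak{B})$ for $\mathcal{D}(\mathbf{C},\Omega)$ there is some $\mathbf{B}_i\in\mathfrak{B}$ with $\mathbf{B}\subseteq\mathbf{B}_i$.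 *)

(* Defs.v *)
From mathcomp Require Import all_boot.
Set Implicit Arguments. Unset Strict Implicit. Unset Printing Implicit Defensive.

(* Causes: the elements of a finite type V (the set C).
   A literal is a pair (X, b): (X, true) is the literal X, (X, false) is X-bar.
   Potential outcomes D(C, Omega): D w c = D_c(w). *)

Definition literal (V : finType) := (V * bool)%type.

Definition litval (V : finType) (L : literal V) (c : {ffun V -> bool}) : bool :=
  if L.2 then c L.1 else ~~ c L.1.

Definition conjB (V : finType) (B : {set literal V}) (c : {ffun V -> bool}) : bool :=
  [forall L in B, litval L c].

Definition dotP (V : finType) (C1 : {set V}) (B : {set literal V}) : Prop :=
  (forall L, L \in B -> L.1 \in C1) /\
  (forall X : V, ~ ((X, true) \in B /\ (X, false) \in B)).

Definition is_scr (Omega : Type) (V : finType)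
    (D : Omega -> {ffun V -> bool} -> bool)
    (p : nat) (A : 'I_p -> Omega -> bool) (Bs : 'I_p -> {set literal V}) : Prop :=
  (forall i, dotP [set: V] (Bs i)) /\
  (forall w c, D w c = [exists j, A j w && conjB (Bs j) c]).

Definition irreducible (Omega : Type) (V : finType)
    (D : Omega -> {ffun V -> bool} -> bool) (B : {set literal V}) : Prop :=
  forall p A Bs, @is_scr Omega V D p A Bs -> exists i, B \subset Bs i.

(* With S having one literal per variable of C1 and c2 only read on
   C2 = V \ C1, setlits B c2 is the intervention "B = 1, C2 = c2". *)
Definition setlits (V : finType) (S : {set literal V}) (c2 : {ffun V -> bool})
  : {ffun V -> bool} :=
  [ffun X => if (X, true) \in S then true
             else if (X, false) \in S then false else c2 X].

(* complement literal Lbar, so "L = 0" is "Lbar = 1" *)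
Definition negLit (V : finType) (L : literal V) : literal V := (L.1, ~~ L.2).

(* Main.v *)
Require Import Defs.
From mathcomp Require Import all_boot.
From Stdlib Require Import Classical.
Set Implicit Arguments. Unset Strict Implicit. Unset Printing Implicit Defensive.

Definition lits (V : finType) (c : {ffun V -> bool}) : {set literal V} :=
  [set L : literal V | L.2 == c L.1].

Definition upd (V : finType) (c : {ffun V -> bool}) (X : V) (b : bool)
  : {ffun V -> bool} := [ffun Y => if Y == X then b else c Y].

Lemma litvalE (V : finType) (L : literal V) c : litval L c = (L.2 == c L.1).
Proof. by case: L => X [] /=; rewrite /litval /=; case: (c X). Qed.

Lemma conj_lits (V : finType) (c c' : {ffun V -> bool}) :
  conjB (lits c) c' -> c' = c.
Proof.
move=> /forallP H; apply/ffunP => X.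
have := H (X, c X); rewrite inE eqxx litvalE /= => /eqP.
by [].
Qed.

Lemma conj_lits_self (V : finType) (S : {set literal V}) c :
  S \subset lits c -> conjB S c.
Proof.
move=> /subsetP H; apply/forallP => L; apply/implyP => LS.
by have := H L LS; rewrite inE litvalE.
Qed.

Lemma conj_litsD (V : finType) (c c' : {ffun V -> bool}) X :
  conjB (lits c :\ (X, c X)) c' -> c' = c \/ c' = upd c X (~~ c X).
Proof.
move=> /forallP H.
have HY : forall Y, Y != X -> c' Y = c Y.
  move=> Y nYX; have := H (Y, c Y).
  rewrite !inE /= eqxx andbT litvalE /=.
  have -> : (Y, c Y) != (X, c X) by apply/negP => /eqP [] E; rewrite E eqxx in nYX.
  by move=> /eqP.
case E: (c' X == c X).
  left; apply/ffunP => Y; case: (eqVneq Y X) => [->|nYX]; first exact/eqP.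
  exact: HY.
right; apply/ffunP => Y; rewrite ffunE; case: (eqVneq Y X) => [->|nYX].
  by move: E; case: (c' X); case: (c X).
exact: HY.
Qed.

Lemma setlits_self (V : finType) (B : {set literal V}) c :
  B \subset lits c -> setlits B c = c.
Proof.
move=> /subsetP H; apply/ffunP => X; rewrite ffunE.
case: ifP => [/H|_]; first by rewrite inE /= => /eqP.
case: ifP => [/H|_] //; by rewrite inE /= => /eqP.
Qed.

Lemma setlits_flip (V : finType) (B : {set literal V}) L c2 :
  L \in B ->
  setlits ((B :\ L) :|: [set negLit L]) c2 = upd (setlits B c2) L.1 (~~ L.2).
Proof.
case: L => X b LB /=; apply/ffunP => Y; rewrite !ffunE /negLit /=.
case: (eqVneq Y X) => [->|nYX].
  case: b LB => LB /=; rewrite !inE ?eqxx ?orbT //=.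
  by case: ifP => // /eqP [].
have F : forall b', ((Y, b') \in (B :\ (X, b)) :|: [set (X, ~~ b)]) = ((Y, b') \in B).
  move=> b'; rewrite !inE.
  have -> : ((Y, b') == (X, ~~ b)) = false by apply/eqP => -[] E; rewrite E eqxx in nYX.
  have -> : ((Y, b') == (X, b)) = false by apply/eqP => -[] E; rewrite E eqxx in nYX.
  by rewrite orbF.
by rewrite !F.
Qed.

Lemma setlits_at (V : finType) (C1 : {set V}) (B : {set literal V}) L c2 :
  dotP C1 B -> L \in B -> setlits B c2 L.1 = L.2.
Proof.
case: L => X [] [_ hB] LB /=; rewrite ffunE LB //.
case: ifP => // T; by case: (hB X).
Qed.

Theorem mainTheorem2 (Omega : Type) (V : finType)
    (D : Omega -> {ffun V -> bool} -> bool)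
    (C1 C2 : {set V})
    (hdisj : [disjoint C1 & C2]) (hcov : C1 :|: C2 = [set: V])
    (B : {set literal V}) (hB : dotP C1 B) (hcard : #|B| = #|C1|) :
  irreducible D B <->
  exists (w : Omega) (c2 : {ffun V -> bool}),
    D w (setlits B c2) = true /\
    (forall L, L \in B ->
       D w (setlits ((B :\ L) :|: [set negLit L]) c2) = false).
Proof.
split; last first.
  move=> [w [c2 [H1 H2]]] p A Bs [_ Hrep].
  move: H1; rewrite Hrep => /existsP [j /andP [Aj Cj]].
  exists j; apply/subsetP => L LB; apply/negPn/negP => nL.
  have := H2 L LB; rewrite Hrep (setlits_flip _ LB).
  move=> /negbT /existsP; apply; exists j; rewrite Aj /=.
  apply/forallP => M; apply/implyP => MB.
  move/forallP: Cj => /(_ M); rewrite MB /= !litvalE /upd ffunE.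
  case: (eqVneq M.1 L.1) => [E|//].
  rewrite E (setlits_at c2 hB LB) => /eqP E2.
  have EM : M = L by case: M MB E E2 => ? ? /= _ -> ->; case: (L).
  by rewrite -EM MB in nL.
move=> Hirr.
apply: NNPP => Hn.
have Hyp : forall w c, D w c = true -> B \subset lits c ->
    exists2 L, L \in B & D w (upd c L.1 (~~ c L.1)) = true.
  move=> w c Dc Bc.
  apply: NNPP => Hn2; apply: Hn; exists w, c.
  rewrite setlits_self //; split => // L LB.
  case E: (D w _) => //; exfalso; apply: Hn2; exists L => //.
  rewrite (setlits_flip _ LB) setlits_self // in E.
  by move/subsetP: Bc => /(_ L LB); rewrite inE => /eqP <-.
pose T : finType := ({ffun V -> bool} * option (literal V))%type.
pose valid (t : T) := if t.2 is Some L then L \in B else ~~ (B \subset lits t.1).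
pose T' : finType := {t : T | valid t}.
pose a (t : T') (w : Omega) := let: (c, o) := val t in
  if o is Some L then D w c && D w (upd c L.1 (~~ c L.1)) else D w c.
pose bs (t : T') := let: (c, o) := val t in
  if o is Some L then lits c :\ (L.1, c L.1) else lits c.
have Hscr : @is_scr Omega V D #|T'| (fun i => a (enum_val i)) (fun i => bs (enum_val i)).
  split.
    move=> i; split=> [L _|X]; first by rewrite inE.
    rewrite /bs; case: (val (enum_val i)) => c [L|] /=.
      by rewrite !inE /= => -[/andP [_ /eqP <-] /andP [_ /eqP]]; case: (c X).
    by rewrite !inE /= => -[/eqP <- /eqP]; case: (c X).
  move=> w c; apply/idP/existsP.
    move=> Dc; case Bc: (B \subset lits c).
      have [L LB DL] := Hyp w c Dc Bc.
      have vt : valid (c, Some L) by [].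
      exists (enum_rank (exist valid _ vt : T')); rewrite enum_rankK /a /bs /= Dc DL /=.
      apply: conj_lits_self; exact: subsetDl.
    have vt : valid (c, None) by rewrite /valid /= Bc.
    exists (enum_rank (exist valid _ vt : T')); rewrite enum_rankK /a /bs /= Dc /=.
    exact: conj_lits_self.
  move=> [j]; rewrite /a /bs; case: (val (enum_val j)) => c0 [L|] /andP [].
    move=> /andP [D1 D2] /conj_litsD [] ->; done.
  by move=> D1 /conj_lits ->.
have [i Hi] := Hirr _ _ _ Hscr.
move: Hi; rewrite /bs; case: (enum_val i) => -[c [L|]] /= vt.
  move=> /subsetP /(_ L vt); rewrite !inE /= => /andP [/negP H /eqP E].
  by apply: H; rewrite -E; case: (L).
by move=> H; rewrite /valid /= H in vt.
Qed.
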